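(* Let $G=(V,E)$ be a connected undirected graph with $V=\{1,\dots,N\}$, let $K\ge2$, $d\ge0$ an integer, $\gamma\in(0,1]$, and let every agent run Exp3-Coop (defined in the context) with delay $d$ and learning rate $\eta=\gamma/(Ke(d+1))$. Then for every $T\ge1$ and every fixed (oblivious) sequence of loss vectors $\boldsymbol\ell_1,\dots,\boldsymbol\ell_T\in[0,1]^K$, $$R_T^{\mathrm{coop}}\le 2d+\frac{Ke(d+1)\ln K}{\gamma}+\gamma\left(\frac{\alpha(G_{\le d})}{2(1-e^{-1})(d+1)N}+\frac{3}{Ke}\right)T.$$
   Context: Setting. $A=\{1,\dots,K\}$ is the action set; an adversary fixes in advance loss vectors $\boldsymbol\ell_t=(\ell_t(1),\dots,\ell_t(K))\in[0,1]^K$, $t\ge1$. For $v\in V$ and $s\ge0$, $N_{\le s}(v)$ is the set of nodes at shortest-path distance at most $s$ from $v$ in $G$ (so $v\in N_{\le s}(v)$). $G_{\le d}$ is the graph on $V$ with an edge between distinct $u,v$ iff their shortest-path distance in $G$ is at most $d$ ($G_{\le 0}$ has no edges), and $\alpha(G_{\le d})$ is its independence number (maximum size of a set of pairwise nonadjacent vertices). Exp3-Coop. Each agent $v\in V$ keeps weights $w_t(i,v)$, with $w_1(i,v)=1$. At round $t=1,2,\dots$: each agent $v$ computes $W_t(v)=\sum_{j\in A}w_t(j,v)$, $p_t(i,v)=w_t(i,v)/W_t(v)$, and draws $I_t(v)\in A$ from $\boldsymbol p_t(v)=(p_t(1,v),\dots,p_t(K,v))$, the draws of different agents being independent conditionally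 on the past; agent $v$ incurs loss $\ell_t(I_t(v))$. Then each agent updates $w_{t+1}(i,v)=p_t(i,v)\exp(-\eta\,\widehat\ell_t(i,v))$, where $$\widehat\ell_t(i,v)=\begin{cases}\dfrac{\ell_{t-d}(i)}{q_{d,t-d}(i,v)}B_{d,t-d}(i,v)&t>d,\\ 0&\text{otherwise},\end{cases}$$ $B_{d,s}(i,v)=\mathbb{1}\{\exists v'\in N_{\le d}(v): I_s(v')=i\}$ and $q_{d,s}(i,v)=1-\prod_{v'\in N_{\le d}(v)}(1-p_s(i,v'))$. (Operationally, this information reaches $v$ through messages forwarded along $G$ at one hop per round.) Average welfare regret: $$R_T^{\mathrm{coop}}=\frac1N\sum_{v\in V}\mathbb E\Bigl[\sum_{t=1}^T\ell_t(I_t(v))\Bigr]-\min_{i\in A}\sum_{t=1}^T\ell_t(i),$$ the expectation being over the agents' internal randomization. *)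

(* Defs.v *)
From Stdlib Require Import Reals Lra Lia List.
Import ListNotations.
Open Scope R_scope.

(* Conventions: agents V = {0,...,N-1} (paper's {1,...,N} shifted),
   actions A = {0,...,K-1}, rounds t = 1,2,...  The graph is given by a
   boolean adjacency relation [adj] on nat. *)

Fixpoint sumR (n : nat) (f : nat -> R) : R :=
  match n with O => 0 | S m => sumR m f + f m end.

Fixpoint prodR (n : nat) (f : nat -> R) : R :=
  match n with O => 1 | S m => prodR m f * f m end.

Fixpoint minR (n : nat) (f : nat -> R) : R :=
  match n with O => f O | S m => Rmin (minR m f) (f (S m)) end.

(* inball adj N s v u = true  iff  u is at shortest-path distance <= s from v
   in G, i.e. u \in N_{<=s}(v) (walks of length <= s through vertices of V). *)
Fixpoint inball (adj : nat -> nat -> bool) (N s v u : nat) : bool :=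
  match s with
  | O => Nat.eqb u v
  | S s' => orb (inball adj N s' v u)
            (existsb (fun w => andb (inball adj N s' v w) (adj w u)) (seq 0 N))
  end.

Definition connected_graph (adj : nat -> nat -> bool) (N : nat) : Prop :=
  (1 <= N)%nat /\
  (forall u v, adj u v = true -> (u < N)%nat /\ (v < N)%nat) /\
  (forall u v, adj u v = adj v u) /\
  (forall u, adj u u = false) /\
  (forall u v, (u < N)%nat -> (v < N)%nat -> exists s, inball adj N s u v = true).

(* S is an independent set of G_{<=d}: distinct vertices, pairwise at
   distance > d *)
Definition indep_Gd (adj : nat -> nat -> bool) (N d : nat) (S : list nat) : Prop :=
  NoDup S /\ (forall u, In u S -> (u < N)%nat) /\
  (forall u v, In u S -> In v S -> u <> v -> inball adj N d u v = false).

Definition indep_number (adj : nat -> nat -> bool) (N d a : nat) : Prop :=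
  (exists S, indep_Gd adj N d S /\ length S = a) /\
  (forall S, indep_Gd adj N d S -> (length S <= a)%nat).

(* An action profile: list a with nth v a 0 = action of agent v.
   A history h = [a_t; a_{t-1}; ...; a_1] (most recent first). *)

Definition qd (adj : nat -> nat -> bool) (N d : nat) (p : nat -> nat -> R)
  (i v : nat) : R :=
  1 - prodR N (fun u => if inball adj N d v u then 1 - p i u else 1).

Definition Bd (adj : nat -> nat -> bool) (N d : nat) (a : list nat) (i v : nat) : R :=
  if existsb (fun u => andb (inball adj N d v u) (Nat.eqb (nth u a O) i)) (seq 0 N)
  then 1 else 0.

(* Exp3-Coop.  pseq h = [p_{t+1}; p_t; ...; p_1] for h = [a_t; ...; a_1],
   where p_s i v = p_s(i,v) is the distribution of agent v at round s. *)
Fixpoint pseq (adj : nat -> nat -> bool) (N K d : nat) (eta : R)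
  (ell : nat -> nat -> R) (h : list (list nat)) : list (nat -> nat -> R) :=
  match h with
  | [] => [fun _ _ => / INR K]
  | _ :: h' =>
      let ps := pseq adj N K d eta ell h' in
      let t := length h in
      let p := hd (fun _ _ => 0) ps in
      let lhat := fun i v =>
        if Nat.ltb d t then
          ell (t - d)%nat i / qd adj N d (nth d ps (fun _ _ => 0)) i v
          * Bd adj N d (nth d h []) i v
        else 0 in
      let w := fun i v => p i v * exp (- eta * lhat i v) in
      (fun i v => w i v / sumR K (fun j => w j v)) :: ps
  end.

(* sum over all profiles a (agents m..N-1 still to be drawn, acc = actions
   already drawn for agents 0..length acc - 1) of prod_v p(a_v,v) * f a *)
Fixpoint sprof (K : nat) (m : nat) (acc : list nat) (p : nat -> nat -> R)
  (f : list nat -> R) : R :=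
  match m with
  | O => f acc
  | S m' => sumR K (fun i => p i (length acc) * sprof K m' (acc ++ [i]) p f)
  end.

(* expected value of the average (over agents) loss incurred in the next
   R rounds, given the history h so far *)
Fixpoint exp_avg_loss (adj : nat -> nat -> bool) (N K d : nat) (eta : R)
  (ell : nat -> nat -> R) (R : nat) (h : list (list nat)) : Rdefinitions.R :=
  match R with
  | O => 0
  | S R' =>
      let p := hd (fun _ _ => 0) (pseq adj N K d eta ell h) in
      let t := S (length h) in
      sprof K N [] p (fun a =>
        / INR N * sumR N (fun v => ell t (nth v a O))
        + exp_avg_loss adj N K d eta ell R' (a :: h))
  end.

Definition regret_coop (adj : nat -> nat -> bool) (N K d : nat) (eta : R)
  (ell : nat -> nat -> R) (T : nat) : R :=
  exp_avg_loss adj N K d eta ell T []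
  - minR (K - 1) (fun i => sumR T (fun s => ell (S s) i)).

(* Main.v *)
Require Import Defs.
From Stdlib Require Import Reals List.
From Stdlib Require Import Lra Lia FunctionalExtensionality Bool.
Import ListNotations.
Open Scope R_scope.

Lemma sumR_ext n f g : (forall i, (i < n)%nat -> f i = g i) -> sumR n f = sumR n g.
Proof. induction n; simpl; intros H; auto. rewrite IHn by (intros; apply H; lia). rewrite H by lia; auto. Qed.

Lemma sumR_plus n f g : sumR n (fun i => f i + g i) = sumR n f + sumR n g.
Proof. induction n; simpl; lra. Qed.

Lemma sumR_minus n f g : sumR n (fun i => f i - g i) = sumR n f - sumR n g.
Proof. induction n; simpl; lra. Qed.

Lemma sumR_scal n c f : sumR n (fun i => c * f i) = c * sumR n f.
Proof. induction n; simpl; [lra|]. rewrite IHn; lra. Qed.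

Lemma sumR_scal_r n c f : sumR n (fun i => f i * c) = sumR n f * c.
Proof. induction n; simpl; [lra|]. rewrite IHn; lra. Qed.

Lemma sumR_le n f g : (forall i, (i < n)%nat -> f i <= g i) -> sumR n f <= sumR n g.
Proof. induction n; simpl; intros H; [lra|]. pose proof (H n ltac:(lia)). assert (sumR n f <= sumR n g) by (apply IHn; intros; apply H; lia). lra. Qed.

Lemma sumR_nonneg n f : (forall i, (i < n)%nat -> 0 <= f i) -> 0 <= sumR n f.
Proof. intros H. replace 0 with (sumR n (fun _ => 0)). apply sumR_le; auto. induction n; simpl; auto. rewrite IHn; [lra|]; intros; apply H; lia. Qed.

Lemma sumR_const n c : sumR n (fun _ => c) = INR n * c.
Proof. induction n; simpl sumR; [simpl; lra|]. rewrite IHn, S_INR; lra. Qed.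

Lemma sumR_swap n m (f : nat -> nat -> R) :
  sumR n (fun i => sumR m (fun j => f i j)) = sumR m (fun j => sumR n (fun i => f i j)).
Proof. induction n; simpl. - induction m; simpl; auto; rewrite <- IHm; lra.
  - rewrite IHn, <- sumR_plus. auto. Qed.

Lemma sumR_shift n f : sumR (S n) f = f O + sumR n (fun i => f (S i)).
Proof. induction n; simpl in *; [lra|]. rewrite IHn; lra. Qed.

Lemma sumR_split a b f : sumR (a + b) f = sumR a f + sumR b (fun i => f (a + i)%nat).
Proof. induction b; simpl. rewrite Nat.add_0_r; lra. rewrite Nat.add_succ_r; simpl. rewrite IHb; lra. Qed.

Lemma sumR_pos n f : (0 < n)%nat -> (forall i, (i < n)%nat -> 0 < f i) -> 0 < sumR n f.
Proof. destruct n; [lia|]. intros _ H. simpl. pose proof (H n ltac:(lia)).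
  assert (0 <= sumR n f) by (apply sumR_nonneg; intros; left; apply H; lia). lra. Qed.

Lemma sumR_le_one_term n f i : (i < n)%nat -> (forall j, (j < n)%nat -> 0 <= f j) -> f i <= sumR n f.
Proof. induction n; intros Hi H; [lia|]. simpl. destruct (Nat.eq_dec i n).
  - subst. assert (0 <= sumR n f) by (apply sumR_nonneg; intros; apply H; lia). lra.
  - assert (f i <= sumR n f) by (apply IHn; [lia|intros; apply H; lia]). pose proof (H n ltac:(lia)). lra. Qed.

Lemma prodR_shift n f : prodR (S n) f = f O * prodR n (fun i => f (S i)).
Proof. induction n; simpl in *; [lra|]. rewrite IHn; lra. Qed.

Lemma prodR_ext n f g : (forall i, (i < n)%nat -> f i = g i) -> prodR n f = prodR n g.
Proof. induction n; simpl; intros H; auto. rewrite IHn by (intros; apply H; lia). rewrite H by lia; auto. Qed.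

Lemma prodR_nonneg n f : (forall i, (i < n)%nat -> 0 <= f i) -> 0 <= prodR n f.
Proof. induction n; simpl; intros H; [lra|]. apply Rmult_le_pos; [apply IHn; intros; apply H; lia| apply H; lia]. Qed.

Lemma prodR_le n f g : (forall i, (i < n)%nat -> 0 <= f i <= g i) -> prodR n f <= prodR n g.
Proof. induction n; simpl; intros H; [lra|]. apply Rmult_le_compat.
  apply prodR_nonneg; intros; apply H; lia. apply H; lia. apply IHn; intros; apply H; lia. apply H; lia. Qed.

Lemma prodR_le1 n f : (forall i, (i < n)%nat -> 0 <= f i <= 1) -> prodR n f <= 1.
Proof. intros H. replace 1 with (prodR n (fun _ => 1)). apply prodR_le; auto.
  clear H; induction n; simpl; auto; rewrite IHn; lra. Qed.

Lemma prodR_exp n f : prodR n (fun i => exp (f i)) = exp (sumR n f).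
Proof. induction n; simpl. rewrite exp_0; auto. rewrite IHn, exp_plus; auto. Qed.

Lemma existsb_prod (P : nat -> bool) n :
  (if existsb P (seq 0 n) then 1 else 0) = 1 - prodR n (fun u => if P u then 0 else 1).
Proof. induction n; [simpl; lra|]. rewrite seq_S, existsb_app. simpl prodR. simpl existsb.
  destruct (existsb P (seq 0 n)), (P n); simpl in *; lra. Qed.

Section Sprof.
Variable K : nat.

Lemma sprof_ext m acc p f g : (forall a, f a = g a) -> sprof K m acc p f = sprof K m acc p g.
Proof. revert acc; induction m; simpl; intros acc H; auto. apply sumR_ext; intros. rewrite IHm; auto. Qed.

Lemma sprof_plus m acc p f g : sprof K m acc p (fun a => f a + g a) = sprof K m acc p f + sprof K m acc p g.
Proof. revert acc; induction m; simpl; intros acc; auto. rewrite <- sumR_plus. apply sumR_ext; intros. rewrite IHm; lra. Qed.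

Lemma sprof_scal m acc p c f : sprof K m acc p (fun a => c * f a) = c * sprof K m acc p f.
Proof. revert acc; induction m; simpl; intros acc; auto. rewrite <- sumR_scal. apply sumR_ext; intros. rewrite IHm; lra. Qed.

Lemma sprof_sum m acc p n (f : nat -> list nat -> R) :
  sprof K m acc p (fun a => sumR n (fun j => f j a)) = sumR n (fun j => sprof K m acc p (f j)).
Proof. induction n; simpl. - revert acc; induction m; simpl; intros; auto.
  transitivity (sumR K (fun _ => 0)). apply sumR_ext; intros; rewrite IHm; lra.
  rewrite sumR_const; lra.
  - rewrite sprof_plus, IHn. auto. Qed.

Variable p : nat -> nat -> R.
Hypothesis p_nn : forall i v, 0 <= p i v.
Hypothesis p_sum : forall v, sumR K (fun i => p i v) = 1.

Lemma sprof_const m acc c : sprof K m acc p (fun _ => c) = c.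
Proof. revert acc; induction m; simpl; intros; auto.
  transitivity (sumR K (fun i => c * p i (length acc))). apply sumR_ext; intros; rewrite IHm; lra.
  rewrite sumR_scal, p_sum; lra. Qed.

Lemma sprof_le m acc f g : (forall a, f a <= g a) -> sprof K m acc p f <= sprof K m acc p g.
Proof. revert acc; induction m; simpl; intros acc H; auto. apply sumR_le; intros.
  apply Rmult_le_compat_l; auto. Qed.

Lemma sprof_prefix m acc f c : (forall ext, f (acc ++ ext) = c) -> sprof K m acc p f = c.
Proof. revert acc; induction m; simpl; intros acc H.
  - rewrite <- (app_nil_r acc). auto.
  - transitivity (sumR K (fun i => p i (length acc) * c)).
    + apply sumR_ext; intros. rewrite IHm; auto. intros. rewrite <- app_assoc. apply H.
    + rewrite sumR_scal_r, p_sum; lra. Qed.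

Lemma sprof_coord m acc v (g : nat -> R) : (length acc <= v < length acc + m)%nat ->
  sprof K m acc p (fun a => g (nth v a O)) = sumR K (fun i => p i v * g i).
Proof. revert acc; induction m; simpl; intros acc Hv; [lia|].
  destruct (Nat.eq_dec v (length acc)).
  - subst. apply sumR_ext; intros i Hi. f_equal.
    apply sprof_prefix. intros ext. rewrite <- app_assoc. simpl.
    rewrite app_nth2 by lia. rewrite Nat.sub_diag. auto.
  - transitivity (sumR K (fun i => p i (length acc) * sumR K (fun j => p j v * g j))).
    + apply sumR_ext; intros. rewrite IHm; auto. rewrite length_app; simpl; lia.
    + rewrite sumR_scal_r, p_sum; lra. Qed.

Lemma sprof_prod m acc n (f : nat -> nat -> R) : length acc = n ->
  sprof K m acc p (fun a => prodR (n + m) (fun u => f u (nth u a O))) =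
  prodR n (fun u => f u (nth u acc O)) * prodR m (fun j => sumR K (fun i => p i (n + j)%nat * f (n + j)%nat i)).
Proof. revert acc n; induction m; intros acc n Hn; subst n.
  - simpl. rewrite Nat.add_0_r. lra.
  - simpl sprof. rewrite prodR_shift.
    transitivity (sumR K (fun i => p i (length acc) * (prodR (S (length acc)) (fun u => f u (nth u (acc ++ [i]) O)) *
       prodR m (fun j => sumR K (fun i0 => p i0 (S (length acc) + j)%nat * f (S (length acc) + j)%nat i0))))).
    + apply sumR_ext; intros i Hi. f_equal.
      rewrite <- (IHm (acc ++ [i]) (S (length acc))). 2: rewrite length_app; simpl; lia.
      apply sprof_ext; intros a. f_equal. lia.
    + rewrite Nat.add_0_r.
      replace (prodR m (fun j => sumR K (fun i => p i (length acc + S j)%nat * f (length acc + S j)%nat i)))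
        with (prodR m (fun j => sumR K (fun i0 => p i0 (S (length acc) + j)%nat * f (S (length acc) + j)%nat i0))).
      2: apply prodR_ext; intros; replace (length acc + S i)%nat with (S (length acc) + i)%nat by lia; auto.
      set (B := prodR m _).
      rewrite <- sumR_scal_r, <- sumR_scal.
      apply sumR_ext; intros i Hi. simpl prodR.
      rewrite app_nth2 by lia. rewrite Nat.sub_diag. simpl nth.
      replace (prodR (length acc) (fun u => f u (nth u (acc ++ [i]) O))) with
        (prodR (length acc) (fun u => f u (nth u acc O))). lra.
      apply prodR_ext; intros. rewrite app_nth1 by lia. auto. Qed.
End Sprof.

Section Graph.
Variable adj : nat -> nat -> bool.
Variable N : nat.
Hypothesis adj_lt : forall u v, adj u v = true -> (u < N)%nat /\ (v < N)%nat.
Hypothesis adj_sym : forall u v, adj u v = adj v u.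

Fixpoint reach (k v u : nat) : Prop :=
  match k with O => u = v | S k' => exists w, (w < N)%nat /\ reach k' v w /\ adj w u = true end.

Lemma inball_reach s v u : inball adj N s v u = true <-> exists k, (k <= s)%nat /\ reach k v u.
Proof. revert u; induction s; intros u; simpl.
  - rewrite Nat.eqb_eq. split. intros; exists O; split; auto. intros [k [Hk H]]. assert (k = O) by lia; subst; auto.
  - rewrite Bool.orb_true_iff, existsb_exists. split.
    + intros [H|[w [Hw H]]]. apply IHs in H. destruct H as [k [Hk H]]. exists k; split; auto.
      apply Bool.andb_true_iff in H. destruct H as [H1 H2]. apply IHs in H1. destruct H1 as [k [Hk H1]].
      exists (S k). split; [lia|]. simpl. exists w. apply in_seq in Hw. repeat split; auto; lia.
    + intros [k [Hk H]]. destruct (Nat.le_gt_cases k s). left. apply IHs. exists k; auto.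
      right. assert (k = S s) by lia. subst. simpl in H. destruct H as [w [Hw [H1 H2]]].
      exists w. split. apply in_seq; lia. apply Bool.andb_true_iff. split; auto. apply IHs. exists s; auto. Qed.

Lemma reach_front k v u w : (w < N)%nat -> adj v w = true -> reach k w u -> reach (S k) v u.
Proof. revert u. induction k; intros u0 Hw Hvw H; rename u0 into u.
  - simpl in *. subst. exists v. repeat split; auto. apply (adj_lt v w); auto.
  - destruct H as [w1 [Hw1 [H1 H2]]]. exists w1. repeat split; auto. Qed.

Lemma reach_sym k v u : reach k v u -> reach k u v.
Proof. revert v u; induction k; simpl; intros v u H; auto.
  destruct H as [w [Hw [H1 H2]]]. apply IHk in H1. apply (reach_front k u v w); auto.
  rewrite adj_sym; auto. Qed.

Lemma inball_sym s v u : inball adj N s v u = inball adj N s u v.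
Proof. destruct (inball adj N s v u) eqn:E1; destruct (inball adj N s u v) eqn:E2; auto.
  - apply inball_reach in E1. destruct E1 as [k [Hk H]]. rewrite <- E2. symmetry. apply inball_reach. exists k; split; auto. apply reach_sym; auto.
  - apply inball_reach in E2. destruct E2 as [k [Hk H]]. rewrite <- E1. apply inball_reach. exists k; split; auto. apply reach_sym; auto. Qed.
End Graph.

Lemma inball_refl adj N s v : inball adj N s v v = true.
Proof. induction s; simpl. apply Nat.eqb_refl. rewrite IHs; auto. Qed.

Definition lsum (l : list nat) (f : nat -> R) : R := fold_right (fun x acc => f x + acc) 0 l.

Lemma lsum_seq n f : lsum (seq 0 n) f = sumR n f.
Proof. induction n; auto. rewrite seq_S. unfold lsum in *. rewrite fold_right_app. simpl.
  rewrite <- IHn. generalize (f n). intro c. clear IHn. generalize (seq 0 n). induction l; simpl; lra. Qed.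

Lemma lsum_le l f g : (forall x, In x l -> f x <= g x) -> lsum l f <= lsum l g.
Proof. induction l; simpl; intros H; [lra|]. pose proof (H a (or_introl eq_refl)).
  assert (lsum l f <= lsum l g) by (apply IHl; auto). lra. Qed.

Lemma lsum_nonneg l f : (forall x, In x l -> 0 <= f x) -> 0 <= lsum l f.
Proof. induction l; simpl; intros H; [lra|]. pose proof (H a (or_introl eq_refl)).
  assert (0 <= lsum l f) by (apply IHl; auto). lra. Qed.

Lemma lsum_filter (P : nat -> bool) l f : lsum (filter P l) f = lsum l (fun u => if P u then f u else 0).
Proof. induction l; simpl; auto. destruct (P a); simpl; rewrite IHl; lra. Qed.

Lemma lsum_split (P : nat -> bool) l f : lsum l f = lsum (filter P l) f + lsum (filter (fun u => negb (P u)) l) f.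
Proof. induction l; simpl; [lra|]. destruct (P a); simpl; rewrite IHl; lra. Qed.

Lemma lsum_scal_r l f c : lsum l (fun u => f u * c) = lsum l f * c.
Proof. induction l; simpl; [lra|]. rewrite IHl; lra. Qed.

Lemma filter_length_lt (P : nat -> bool) l x : In x l -> P x = false -> (length (filter P l) < length l)%nat.
Proof. induction l; simpl; intros H Hx; [contradiction|]. destruct H as [->|H].
  - rewrite Hx. pose proof (filter_length_le P l). lia.
  - destruct (P a); simpl; pose proof (IHl H Hx); lia. Qed.

Lemma exists_min (F : nat -> R) l : l <> [] -> exists x, In x l /\ forall y, In y l -> F x <= F y.
Proof. induction l; intros H; [congruence|]. destruct l as [|b l].
  - exists a. split; [left; auto|]. intros y [<-|[]]; lra.
  - destruct IHl as [x [Hx Hm]]; [congruence|]. destruct (Rle_dec (F a) (F x)).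
    + exists a. split; [left; auto|]. intros y [<-|Hy]; [lra|]. specialize (Hm y Hy); lra.
    + exists x. split; [right; auto|]. intros y [<-|Hy]; [lra|]. auto. Qed.

Section Greedy.
Variable nb : nat -> nat -> bool.
Hypothesis nb_refl : forall v, nb v v = true.
Hypothesis nb_sym : forall u v, nb u v = nb v u.
Variable p : nat -> R.

Definition PS (S : list nat) v := lsum S (fun u => if nb v u then p u else 0).
Definition fS (S : list nat) := lsum S (fun v => p v / PS S v).

Lemma PS_pos S v : (forall x, In x S -> 0 < p x) -> In v S -> 0 < PS S v.
Proof. intros Hp. unfold PS. induction S; simpl; intros H; [contradiction|].
  assert (0 <= lsum S (fun u => if nb v u then p u else 0)).
  { apply lsum_nonneg; intros. destruct (nb v x); [left; apply Hp; simpl; auto|lra]. }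
  destruct H as [->|H].
  - rewrite nb_refl. pose proof (Hp v (or_introl eq_refl)). lra.
  - assert (0 <= (if nb v a then p a else 0)) by (destruct (nb v a); [left; apply Hp; simpl; auto|lra]).
    pose proof (IHS ltac:(intros; apply Hp; simpl; auto) H). lra. Qed.

Lemma greedy n : forall S, (length S <= n)%nat -> NoDup S -> (forall x, In x S -> 0 < p x) ->
  exists I, NoDup I /\ incl I S /\ (forall u v, In u I -> In v I -> u <> v -> nb u v = false) /\
    fS S <= INR (length I).
Proof. induction n; intros S Hl Hnd Hp.
  - destruct S; [|simpl in Hl; lia]. exists []. split; [constructor|]. split; [intros ? []|]. split; [intros u v []|].
    unfold fS; simpl; lra.
  - destruct S as [|s0 S0] eqn:ES.
    { exists []. split; [constructor|]. split; [intros ? []|]. split; [intros u v []|]. unfold fS; simpl; lra. }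
    rewrite <- ES in *.
    destruct (exists_min (PS S) S) as [w [Hw Hmin]]; [rewrite ES; congruence|].
    set (S' := filter (fun u => negb (nb w u)) S).
    assert (HS'S : forall x, In x S' -> In x S) by (intros x Hx; apply filter_In in Hx; tauto).
    assert (Hlt : (length S' < length S)%nat).
    { apply (filter_length_lt _ S w); auto. rewrite nb_refl; auto. }
    destruct (IHn S') as [I' [HndI [HinI [HindI HfI]]]].
    lia. apply NoDup_filter; auto. intros; apply Hp, HS'S; auto.
    exists (w :: I'). split; [|split; [|split]].
    + constructor; auto. intro HI. apply HinI in HI. apply filter_In in HI. rewrite nb_refl in HI. simpl in HI. destruct HI; discriminate.
    + intros x [<-|Hx]; auto.
    + assert (Hnot : forall x, In x I' -> nb w x = false).
      { intros x Hx. apply HinI, filter_In in Hx. destruct Hx as [_ Hx]. destruct (nb w x); auto. }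
      intros u v [<-|Hu] [<-|Hv] Huv; auto. congruence. rewrite nb_sym; auto.
    + simpl length. rewrite S_INR.
      assert (HPw : 0 < PS S w) by (apply PS_pos; auto).
      unfold fS. rewrite (lsum_split (nb w)).
      assert (H1 : lsum (filter (nb w) S) (fun v => p v / PS S v) <= 1).
      { apply Rle_trans with (lsum (filter (nb w) S) (fun v => p v * / PS S w)).
        - apply lsum_le; intros x Hx. apply filter_In in Hx. destruct Hx as [Hx _].
          unfold Rdiv. apply Rmult_le_compat_l. left; apply Hp; auto.
          apply Rinv_le_contravar; auto.
        - rewrite lsum_scal_r, lsum_filter. fold (PS S w). rewrite Rinv_r; lra. }
      assert (H2 : lsum (filter (fun u => negb (nb w u)) S) (fun v => p v / PS S v) <= fS S').
      { unfold fS. fold S'. apply lsum_le; intros x Hx.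
        assert (0 < PS S' x) by (apply PS_pos; auto; intros; apply Hp, HS'S; auto).
        unfold Rdiv. apply Rmult_le_compat_l. left; apply Hp; auto.
        apply Rinv_le_contravar; auto. unfold PS, S'. rewrite lsum_filter.
        apply lsum_le; intros y Hy. destruct (negb (nb w y)); [lra|].
        destruct (nb x y); [|lra]. left; apply Hp; auto. }
      lra. Qed.
End Greedy.

Section Alg.
Variables (adj : nat -> nat -> bool) (N K d : nat) (eta : R) (ell : nat -> nat -> R).

Definition Pp (h : list (list nat)) : nat -> nat -> R := hd (fun _ _ => 0) (pseq adj N K d eta ell h).

Definition Lh (h : list (list nat)) (i v : nat) : R :=
  match h with
  | [] => 0
  | a :: h' => if Nat.ltb d (length h) then
       ell (length h - d)%nat i / qd adj N d (Pp (skipn d h')) i v * Bd adj N d (nth d h []) i v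
     else 0
  end.

Definition Zh (h : list (list nat)) (v : nat) : R :=
  sumR K (fun j => Pp (tl h) j v * exp (- eta * Lh h j v)).

Lemma nth_pseq m h : (m <= length h)%nat -> nth m (pseq adj N K d eta ell h) (fun _ _ => 0) = Pp (skipn m h).
Proof. revert m; induction h; intros m Hm.
  - simpl in Hm. assert (m = O) by lia. subst. reflexivity.
  - destruct m. reflexivity. simpl. apply IHh. simpl in Hm; lia. Qed.

Lemma Pp_cons a h i v : Pp (a :: h) i v = Pp h i v * exp (- eta * Lh (a :: h) i v) / Zh (a :: h) v.
Proof. unfold Zh. simpl tl. unfold Lh. unfold Pp at 1. cbn [pseq hd].
  destruct (Nat.ltb d (length (a :: h))) eqn:E.
  - apply Nat.ltb_lt in E. simpl length in *. rewrite nth_pseq by lia. reflexivity.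
  - reflexivity. Qed.
End Alg.

Lemma prodR_le_factor n f k : (k < n)%nat -> (forall i, (i < n)%nat -> 0 <= f i <= 1) -> prodR n f <= f k.
Proof. induction n; intros Hk H; [lia|]. simpl. pose proof (H n ltac:(lia)).
  assert (0 <= prodR n f) by (apply prodR_nonneg; intros; apply H; lia).
  destruct (Nat.eq_dec k n).
  - subst. assert (prodR n f <= 1) by (apply prodR_le1; intros; apply H; lia). nra.
  - assert (prodR n f <= f k) by (apply IHn; [lia|intros; apply H; lia]). nra. Qed.

Lemma qd_ge adj N d (p : nat -> nat -> R) i v : (v < N)%nat -> (forall u, 0 <= p i u <= 1) -> p i v <= qd adj N d p i v.
Proof. intros Hv Hp. unfold qd.
  assert (prodR N (fun u => if inball adj N d v u then 1 - p i u else 1) <= 1 - p i v).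
  { eapply Rle_trans. apply (prodR_le_factor _ _ v); auto.
    intros u _. destruct (inball adj N d v u); [pose proof (Hp u)|]; lra.
    rewrite inball_refl. lra. }
  lra. Qed.

Lemma Bd_01 adj N d a i v : Bd adj N d a i v = 0 \/ Bd adj N d a i v = 1.
Proof. unfold Bd. destruct existsb; auto. Qed.

Section Indep.
Variables (adj : nat -> nat -> bool) (N K d : nat) (eta : R) (ell : nat -> nat -> R).

Lemma pseq_indep e1 e2 h : length e1 = length e2 -> (length e1 <= d)%nat ->
  pseq adj N K d eta ell (e1 ++ h) = pseq adj N K d eta ell (e2 ++ h).
Proof. revert e2; induction e1 as [|a1 e1 IH]; intros [|a2 e2] Hl Hd; simpl in Hl; try lia; auto.
  change ((a1 :: e1) ++ h) with (a1 :: (e1 ++ h)). change ((a2 :: e2) ++ h) with (a2 :: (e2 ++ h)).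
  cbn [pseq]. rewrite (IH e2) by (simpl in Hd; lia).
  assert (Hn : nth d (a1 :: e1 ++ h) [] = nth d (a2 :: e2 ++ h) []).
  { change (a1 :: e1 ++ h) with ((a1 :: e1) ++ h). change (a2 :: e2 ++ h) with ((a2 :: e2) ++ h).
    rewrite !app_nth2 by (simpl in *; lia). simpl length. f_equal. lia. }
  rewrite Hn. simpl length. rewrite !length_app. replace (length e1) with (length e2) by lia. reflexivity. Qed.

Definition Pd h := Pp adj N K d eta ell (repeat [] d ++ h).

Lemma Pp_indep e h : length e = d -> Pp adj N K d eta ell (e ++ h) = Pd h.
Proof. intros He. unfold Pd, Pp. rewrite (pseq_indep e (repeat [] d)); auto. rewrite repeat_length; auto. lia. Qed.
End Indep.

Lemma exp_pow x n : exp x ^ n = exp (INR n * x).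
Proof. induction n; simpl pow. simpl; rewrite Rmult_0_l, exp_0; auto.
  rewrite IHn, S_INR, <- exp_plus. f_equal; ring. Qed.

Lemma cpow_le_e d : (1 + / INR d) ^ d <= exp 1.
Proof. destruct d. simpl. pose proof (exp_ineq1_le 1). lra.
  assert (0 < INR (S d)) by (apply lt_0_INR; lia).
  apply Rle_trans with (exp (/ INR (S d)) ^ S d).
  - apply pow_incr. split. pose proof (Rinv_0_lt_compat _ H). lra. apply exp_ineq1_le.
  - rewrite exp_pow. right. f_equal. field. lra. Qed.

Lemma sumR_delta n (g : nat -> R) i : (i < n)%nat -> sumR n (fun j => if Nat.eqb j i then g j else 0) = g i.
Proof. induction n; intros Hi; [lia|]. simpl. destruct (Nat.eqb n i) eqn:E.
  - apply Nat.eqb_eq in E. subst. replace (sumR i _) with 0. lra.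
    symmetry. transitivity (sumR i (fun _ => 0)). apply sumR_ext; intros j Hj.
    destruct (Nat.eqb j i) eqn:E2; auto. apply Nat.eqb_eq in E2; lia. rewrite sumR_const; lra.
  - apply Nat.eqb_neq in E. rewrite IHn by lia. lra. Qed.

Lemma exp_neg_quad x : 0 <= x -> exp (- x) <= 1 - x + 3 / 4 * x ^ 2.
Proof. intros Hx. rewrite exp_Ropp.
  assert (H1 : (1 + x / 2) ^ 2 <= exp x).
  { assert (Ee : exp x = exp (x / 2) * exp (x / 2)) by (rewrite <- exp_plus; f_equal; field).
    rewrite Ee. simpl. rewrite Rmult_1_r.
    pose proof (exp_ineq1_le (x / 2)). apply Rmult_le_compat; lra. }
  assert (0 < (1 + x / 2) ^ 2) by (apply pow_lt; lra).
  apply Rle_trans with (/ (1 + x / 2) ^ 2). apply Rinv_le_contravar; auto.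
  apply Rmult_le_reg_r with ((1 + x / 2) ^ 2); auto. rewrite Rinv_l by lra.
  assert (0 <= x ^ 3 / 2 + 3 * x ^ 4 / 16) by (assert (0 <= x ^ 3) by (apply pow_le; lra); assert (0 <= x ^ 4) by (apply pow_le; lra); lra).
  replace ((1 - x + 3 / 4 * x ^ 2) * (1 + x / 2) ^ 2) with (1 + (x ^ 3 / 2 + 3 * x ^ 4 / 16)) by field. lra. Qed.

Lemma ln_le_sub1 y : 0 < y -> ln y <= y - 1.
Proof. intros. pose proof (exp_ineq1_le (ln y)). rewrite exp_ln in H0; auto. lra. Qed.

Fixpoint SP (f : list (list nat) -> R) (h : list (list nat)) : R :=
  match h with [] => 0 | a :: h' => f h + SP f h' end.

Lemma sum_alg N M X c0 b (a : nat -> R) (Q : nat -> nat -> R) :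
  sumR N (fun w => X + sumR M (fun j => a j + c0 * Q w j + b)) =
  INR N * X + INR N * sumR M (fun j => a j + b) + c0 * sumR M (fun j => sumR N (fun w => Q w j)).
Proof. rewrite sumR_plus, sumR_const.
  rewrite (sumR_ext N _ (fun w => sumR M (fun j => a j + b) + c0 * sumR M (fun j => Q w j))).
  2: intros; rewrite <- sumR_scal, <- sumR_plus; apply sumR_ext; intros; ring.
  rewrite sumR_plus, sumR_const, sumR_scal. rewrite (sumR_swap N M (fun w j => Q w j)). ring. Qed.

Section Props.
Variables (adj : nat -> nat -> bool) (N K d : nat) (eta : R) (ell : nat -> nat -> R) (T : nat).
Hypothesis HK : (1 <= K)%nat.
Hypothesis Heta : 0 <= eta.
Hypothesis Heta_small : eta * INR K * exp 1 * (INR d + 1) <= 1.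
Hypothesis Hell : forall t i, (1 <= t <= T)%nat -> (i < K)%nat -> 0 <= ell t i <= 1.

Notation Pp := (Pp adj N K d eta ell).
Notation Lh := (Lh adj N K d eta ell).
Notation Zh := (Zh adj N K d eta ell).
Notation Pd := (Pd adj N K d eta ell).

Lemma Pp_nil i v : Pp [] i v = / INR K.
Proof. reflexivity. Qed.

Lemma Pp_pos h i v : 0 < Pp h i v.
Proof. revert i; induction h; intros i.
  - rewrite Pp_nil. apply Rinv_0_lt_compat. apply lt_0_INR. lia.
  - rewrite Pp_cons. unfold Rdiv. apply Rmult_lt_0_compat. apply Rmult_lt_0_compat; auto. apply exp_pos.
    apply Rinv_0_lt_compat. unfold Zh. apply sumR_pos. lia. intros. simpl tl. apply Rmult_lt_0_compat; auto. apply exp_pos. Qed.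

Lemma Zh_pos h v : 0 < Zh h v.
Proof. unfold Zh. apply sumR_pos. lia. intros. apply Rmult_lt_0_compat. apply Pp_pos. apply exp_pos. Qed.

Lemma Pp_sum h v : sumR K (fun i => Pp h i v) = 1.
Proof. destruct h.
  - transitivity (sumR K (fun _ => / INR K)). apply sumR_ext; auto. rewrite sumR_const. field. apply not_0_INR; lia.
  - transitivity (sumR K (fun i => Pp h i v * exp (- eta * Lh (l :: h) i v)) * / Zh (l :: h) v).
    rewrite <- sumR_scal_r. apply sumR_ext; intros. rewrite Pp_cons. auto.
    pose proof (Zh_pos (l :: h) v) as Hz. unfold Zh in *. simpl tl in *. field. lra. Qed.

Lemma Pp_le1 h i v : (i < K)%nat -> Pp h i v <= 1.
Proof. intros Hi. rewrite <- (Pp_sum h v). apply (sumR_le_one_term K (fun i => Pp h i v)); auto. intros; left; apply Pp_pos. Qed.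

Lemma qd_Pp_ge h i v : (i < K)%nat -> (v < N)%nat -> Pp h i v <= qd adj N d (Pp h) i v.
Proof. intros. apply qd_ge; auto. intros; split; [left; apply Pp_pos| apply Pp_le1; auto]. Qed.

Lemma qd_Pp_pos h i v : (i < K)%nat -> (v < N)%nat -> 0 < qd adj N d (Pp h) i v.
Proof. intros. eapply Rlt_le_trans. apply (Pp_pos h i v). apply qd_Pp_ge; auto. Qed.

Lemma Lh_nonneg h i v : (length h <= T)%nat -> (i < K)%nat -> (v < N)%nat -> 0 <= Lh h i v.
Proof. intros Hl Hi Hv. destruct h as [|a h']; [simpl; lra|]. cbn [Lh tl]. change (length (a :: h')) with (S (length h')). destruct (Nat.ltb d (S (length h'))) eqn:E; [|lra].
  apply Nat.ltb_lt in E. simpl in Hl. pose proof (Hell (S (length h') - d) i ltac:(lia) Hi).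
  pose proof (qd_Pp_pos (skipn d h') i v Hi Hv). destruct (Bd_01 adj N d (nth d (a :: h') []) i v) as [-> | ->].
  lra. unfold Rdiv. rewrite Rmult_1_r. apply Rmult_le_pos; [lra|]. left; apply Rinv_0_lt_compat; auto. Qed.

Lemma Lh_bound h i v : (length h <= T)%nat -> (i < K)%nat -> (v < N)%nat ->
  Pp (skipn d (tl h)) i v * Lh h i v <= 1.
Proof. intros Hl Hi Hv. destruct h as [|a h']; [simpl; lra|]. cbn [Lh tl]. change (length (a :: h')) with (S (length h')). destruct (Nat.ltb d (S (length h'))) eqn:E; [|lra].
  apply Nat.ltb_lt in E. simpl in Hl. pose proof (Hell (S (length h') - d) i ltac:(lia) Hi).
  pose proof (qd_Pp_pos (skipn d h') i v Hi Hv). pose proof (qd_Pp_ge (skipn d h') i v Hi Hv).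
  pose proof (Pp_pos (skipn d h') i v).
  destruct (Bd_01 adj N d (nth d (a :: h') []) i v) as [-> | ->]. lra.
  set (q := qd adj N d (Pp (skipn d h')) i v) in *. set (l := ell _ i) in *. set (pp := Pp _ i v) in *.
  replace (pp * (l / q * 1)) with ((pp / q) * l) by (field; lra).
  assert (pp / q <= 1). { apply Rmult_le_reg_r with q; auto. unfold Rdiv. rewrite Rmult_assoc, Rinv_l; lra. }
  assert (0 <= pp / q) by (unfold Rdiv; apply Rmult_le_pos; [lra|left; apply Rinv_0_lt_compat; lra]). nra. Qed.

Lemma exp_neg_ge x : 1 - x <= exp (- x).
Proof. pose proof (exp_ineq1_le (- x)). lra. Qed.

Lemma exp_le_mono x y : x <= y -> exp x <= exp y.
Proof. intros [H|H]. left; apply exp_increasing; auto. subst; lra. Qed.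

Lemma Zh_le1 h v : (length h <= T)%nat -> (v < N)%nat -> Zh h v <= 1.
Proof. intros Hl Hv. unfold Zh. rewrite <- (Pp_sum (tl h) v). apply sumR_le; intros i Hi.
  pose proof (Pp_pos (tl h) i v). pose proof (Lh_nonneg h i v Hl Hi Hv).
  assert (exp (- eta * Lh h i v) <= 1). { rewrite <- exp_0. apply exp_le_mono. nra. }
  nra. Qed.

Lemma Zh_lower h v : (v < N)%nat -> Zh h v >= 1 - eta * sumR K (fun j => Pp (tl h) j v * Lh h j v).
Proof. intros Hv. unfold Zh. rewrite <- (Pp_sum (tl h) v), <- sumR_scal, <- sumR_minus.
  apply Rle_ge, sumR_le; intros i Hi. pose proof (Pp_pos (tl h) i v).
  pose proof (exp_neg_ge (eta * Lh h i v)). replace (- eta * Lh h i v) with (- (eta * Lh h i v)) by ring. nra. Qed.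

Lemma Pp_cons_lower a h i v : (S (length h) <= T)%nat -> (i < K)%nat -> (v < N)%nat ->
  Pp h i v * (1 - eta * Lh (a :: h) i v) <= Pp (a :: h) i v.
Proof. intros Hl Hi Hv. rewrite Pp_cons. pose proof (Zh_pos (a :: h) v). pose proof (Zh_le1 (a :: h) v Hl Hv).
  pose proof (Pp_pos h i v). pose proof (exp_neg_ge (eta * Lh (a :: h) i v)).
  replace (- eta * Lh (a :: h) i v) with (- (eta * Lh (a :: h) i v)) by ring.
  set (E := exp (- (eta * Lh (a :: h) i v))) in *. set (Z := Zh _ _) in *.
  assert (0 < E) by apply exp_pos.
  assert (Pp h i v * E <= Pp h i v * E / Z).
  { apply Rmult_le_reg_r with Z; auto. replace (Pp h i v * E / Z * Z) with (Pp h i v * E) by (field; lra).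
    assert (0 < Pp h i v * E) by nra. nra. }
  nra. Qed.

Lemma Pp_cons_upper a h i v : (S (length h) <= T)%nat -> (i < K)%nat -> (v < N)%nat ->
  Pp (a :: h) i v <= Pp h i v / Zh (a :: h) v.
Proof. intros Hl Hi Hv. rewrite Pp_cons. pose proof (Zh_pos (a :: h) v).
  pose proof (Pp_pos h i v). pose proof (Lh_nonneg (a :: h) i v Hl Hi Hv).
  assert (exp (- eta * Lh (a :: h) i v) <= 1). { rewrite <- exp_0. apply exp_le_mono. nra. }
  unfold Rdiv. apply Rmult_le_compat_r. left; apply Rinv_0_lt_compat; auto. nra. Qed.
Let c := 1 + / INR d.

Lemma c_ge1 : 1 <= c.
Proof. unfold c. destruct d. simpl. rewrite Rinv_0; lra. pose proof (Rinv_0_lt_compat (INR (S n)) ltac:(apply lt_0_INR; lia)). lra. Qed.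

Lemma ratio h : (length h <= T)%nat -> forall m i v, (m <= d)%nat -> (m <= length h)%nat -> (i < K)%nat -> (v < N)%nat ->
  Pp h i v <= c ^ m * Pp (skipn m h) i v.
Proof. induction h as [|a h IH]; intros Hl m i v Hmd Hmh Hi Hv.
  - simpl in Hmh. assert (m = O) by lia. subst. simpl. lra.
  - destruct m as [|m]. simpl; lra.
    simpl in Hl, Hmh.
    assert (Hd : (1 <= d)%nat) by lia.
    assert (Hdpos : 0 < INR d) by (apply lt_0_INR; lia).
    assert (HZ : INR d / (INR d + 1) <= Zh (a :: h) v).
    { pose proof (Zh_lower (a :: h) v Hv) as HZl. simpl tl in HZl.
      assert (Hsum : sumR K (fun j => Pp h j v * Lh (a :: h) j v) <= INR K * exp 1).
      { rewrite <- sumR_const. apply sumR_le; intros j Hj.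
        destruct (Nat.ltb d (length (a :: h))) eqn:E.
        - apply Nat.ltb_lt in E. simpl in E.
          pose proof (IH ltac:(lia) d j v ltac:(lia) ltac:(lia) Hj Hv) as Hr.
          pose proof (Lh_nonneg (a :: h) j v ltac:(simpl; lia) Hj Hv).
          pose proof (Lh_bound (a :: h) j v ltac:(simpl; lia) Hj Hv) as Hb. simpl tl in Hb.
          pose proof (cpow_le_e d). fold c in H0.
          pose proof (Pp_pos (skipn d h) j v).
          apply Rle_trans with (c ^ d * Pp (skipn d h) j v * Lh (a :: h) j v). apply Rmult_le_compat_r; auto.
          rewrite Rmult_assoc. apply Rle_trans with (c ^ d * 1). apply Rmult_le_compat_l; auto.
          apply pow_le. pose proof c_ge1; lra. lra.
        - unfold Lh. rewrite E. rewrite Rmult_0_r. pose proof (exp_pos 1). lra. }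
      assert (eta * sumR K (fun j => Pp h j v * Lh (a :: h) j v) <= 1 / (INR d + 1)).
      { apply Rle_trans with (eta * (INR K * exp 1)). apply Rmult_le_compat_l; auto.
        apply Rmult_le_reg_r with (INR d + 1). lra. unfold Rdiv. rewrite Rmult_1_l, Rinv_l by lra. lra. }
      replace (INR d / (INR d + 1)) with (1 - 1 / (INR d + 1)) by (field; lra). lra. }
    pose proof (Pp_cons_upper a h i v ltac:(lia) Hi Hv).
    pose proof (Pp_pos h i v).
    assert (Pp h i v / Zh (a :: h) v <= c * Pp h i v).
    { unfold c. assert (0 < Zh (a :: h) v) by (eapply Rlt_le_trans; [|apply HZ]; apply Rdiv_lt_0_compat; lra).
      apply Rmult_le_reg_r with (Zh (a :: h) v); auto.
      replace (Pp h i v / Zh (a :: h) v * Zh (a :: h) v) with (Pp h i v) by (field; lra).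
      replace ((1 + / INR d) * Pp h i v * Zh (a :: h) v) with (Pp h i v * ((INR d + 1) / INR d * Zh (a :: h) v)) by (field; lra).
      assert (1 <= (INR d + 1) / INR d * Zh (a :: h) v).
      { apply Rle_trans with ((INR d + 1) / INR d * (INR d / (INR d + 1))). right; field; lra.
        apply Rmult_le_compat_l; auto. apply Rlt_le, Rdiv_lt_0_compat; lra. }
      nra. }
    pose proof (IH ltac:(lia) m i v ltac:(lia) ltac:(lia) Hi Hv).
    simpl skipn. simpl pow. pose proof c_ge1. nra. Qed.

Lemma Pd_le h i v : (d + length h <= T)%nat -> (i < K)%nat -> (v < N)%nat ->
  Pd h i v <= exp 1 * Pp h i v.
Proof. intros. unfold Pd. eapply Rle_trans. apply ratio with (m := d); auto.
  rewrite length_app, repeat_length; lia. rewrite length_app, repeat_length; lia.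
  rewrite skipn_app, repeat_length, Nat.sub_diag. simpl.
  rewrite skipn_all2 by (rewrite repeat_length; lia). simpl.
  apply Rmult_le_compat_r. left; apply Pp_pos; auto. apply cpow_le_e. Qed.

Lemma Pp_nn h : forall i v, 0 <= Pp h i v.
Proof. intros; left; apply Pp_pos. Qed.

Lemma sprof_Bd h i v : (i < K)%nat ->
  sprof K N [] (Pp h) (fun a => Bd adj N d a i v) = qd adj N d (Pp h) i v.
Proof. intros Hi. unfold Bd.
  transitivity (sprof K N [] (Pp h) (fun a => 1 + (-1) * prodR (0 + N) (fun u =>
     (fun u j => if inball adj N d v u && Nat.eqb j i then 0 else 1) u (nth u a O)))).
  { apply sprof_ext; intros a. rewrite existsb_prod. simpl (0 + N)%nat. lra. }
  rewrite sprof_plus, sprof_scal, sprof_const by apply Pp_sum.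
  rewrite (sprof_prod K (Pp h) N [] 0 (fun u j => if inball adj N d v u && Nat.eqb j i then 0 else 1)) by reflexivity.
  simpl prodR at 1. unfold qd.
  replace (prodR N (fun j => sumR K (fun i0 => Pp h i0 (0 + j)%nat *
      (if inball adj N d v (0 + j) && Nat.eqb i0 i then 0 else 1))))
   with (prodR N (fun u => if inball adj N d v u then 1 - Pp h i u else 1)). lra.
  apply prodR_ext; intros u Hu. simpl (0 + u)%nat. destruct (inball adj N d v u); simpl.
  - symmetry. transitivity (sumR K (fun j => Pp h j u) - sumR K (fun j => if Nat.eqb j i then Pp h j u else 0)).
    rewrite <- sumR_minus. apply sumR_ext; intros j _. destruct (Nat.eqb j i); lra.
    rewrite Pp_sum, sumR_delta; auto.
  - symmetry. transitivity (sumR K (fun j => Pp h j u)). 2: rewrite Pp_sum; auto. apply sumR_ext; intros; lra. Qed.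

Lemma sprof_coord0 h v (g : nat -> R) : (v < N)%nat ->
  sprof K N [] (Pp h) (fun a => g (nth v a O)) = sumR K (fun i => Pp h i v * g i).
Proof. intros. apply sprof_coord. apply Pp_sum. simpl; lia. Qed.

Fixpoint Ex (n : nat) (h : list (list nat)) (F : list (list nat) -> R) : R :=
  match n with O => F h | S n' => sprof K N [] (Pp h) (fun a => Ex n' (a :: h) F) end.

Lemma Ex_ext n h F G : (forall e, length e = n -> F (e ++ h) = G (e ++ h)) -> Ex n h F = Ex n h G.
Proof. revert h; induction n; intros h H; simpl.
  - apply (H []); auto.
  - apply sprof_ext; intros a. apply IHn. intros e He. replace (e ++ a :: h) with ((e ++ [a]) ++ h) by (rewrite <- app_assoc; auto). apply H.
    rewrite length_app; simpl; lia. Qed.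

Lemma Ex_const n h c0 : Ex n h (fun _ => c0) = c0.
Proof. revert h; induction n; intros h; simpl; auto.
  transitivity (sprof K N [] (Pp h) (fun _ => c0)). apply sprof_ext; auto. apply sprof_const, Pp_sum. Qed.

Lemma Ex_le n h F G : (forall e, length e = n -> F (e ++ h) <= G (e ++ h)) -> Ex n h F <= Ex n h G.
Proof. revert h; induction n; intros h H; simpl.
  - apply (H []); auto.
  - apply sprof_le. apply Pp_nn. intros a. apply IHn. intros e He. replace (e ++ a :: h) with ((e ++ [a]) ++ h) by (rewrite <- app_assoc; auto). apply H.
    rewrite length_app; simpl; lia. Qed.

Lemma Ex_plus n h F G : Ex n h (fun x => F x + G x) = Ex n h F + Ex n h G.
Proof. revert h; induction n; intros h; simpl; auto. rewrite <- sprof_plus. apply sprof_ext; auto. Qed.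

Lemma Ex_scal n h c0 F : Ex n h (fun x => c0 * F x) = c0 * Ex n h F.
Proof. revert h; induction n; intros h; simpl; auto. rewrite <- sprof_scal. apply sprof_ext; auto. Qed.

Lemma Ex_sum n h m (F : nat -> list (list nat) -> R) : Ex n h (fun x => sumR m (fun j => F j x)) = sumR m (fun j => Ex n h (F j)).
Proof. revert h; induction n; intros h; simpl; auto. rewrite <- sprof_sum. apply sprof_ext; auto. Qed.

Lemma Ex_split n1 n2 h F : Ex (n1 + n2) h F = Ex n1 h (fun h1 => Ex n2 h1 F).
Proof. revert h; induction n1; intros h; simpl; auto. apply sprof_ext; auto. Qed.

Lemma Ex_last n h F : Ex (S n) h F = Ex n h (fun h1 => sprof K N [] (Pp h1) (fun a => F (a :: h1))).
Proof. replace (S n) with (n + 1)%nat by lia. rewrite Ex_split. apply Ex_ext; intros; simpl. apply sprof_ext; auto. Qed.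

Lemma Ex_prefix n h F c0 : (forall e, length e = n -> F (e ++ h) = c0) -> Ex n h F = c0.
Proof. intros H. rewrite <- (Ex_const n h c0). apply Ex_ext; auto. Qed.

Hypothesis Heta_pos : 0 < eta.

Section Agent.
Variables (v k : nat).
Hypothesis Hv : (v < N)%nat.
Hypothesis Hk : (k < K)%nat.

Definition g3 (h : list (list nat)) : R :=
  sumR K (fun i => Pp (tl h) i v * Lh h i v) - Lh h k v
  - eta * (3 / 4) * sumR K (fun i => Pp (tl h) i v * (Lh h i v) ^ 2).

Lemma exp3_det h : (length h <= T)%nat -> - ln (INR K) + eta * SP g3 h <= ln (Pp h k v).
Proof. induction h as [|a h IH]; intros Hl.
  - simpl. rewrite Pp_nil, ln_Rinv by (apply lt_0_INR; lia). lra.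
  - simpl in Hl. specialize (IH ltac:(lia)). simpl SP.
    rewrite Pp_cons. pose proof (Zh_pos (a :: h) v) as HZ. pose proof (Pp_pos h k v).
    unfold Rdiv. rewrite ln_mult, ln_mult, ln_exp, ln_Rinv; try apply exp_pos; auto.
    2: apply Rmult_lt_0_compat; auto; apply exp_pos.
    assert (HZb : Zh (a :: h) v <= 1 - eta * sumR K (fun i => Pp h i v * Lh (a :: h) i v)
        + eta ^ 2 * (3 / 4) * sumR K (fun i => Pp h i v * (Lh (a :: h) i v) ^ 2)).
    { unfold Zh. simpl tl. rewrite <- (Pp_sum h v) at 1. rewrite <- !sumR_scal, <- sumR_minus, <- sumR_plus.
      apply sumR_le; intros i Hi. pose proof (Pp_pos h i v).
      pose proof (Lh_nonneg (a :: h) i v ltac:(simpl; lia) Hi Hv).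
      pose proof (exp_neg_quad (eta * Lh (a :: h) i v) ltac:(nra)).
      replace (- eta * Lh (a :: h) i v) with (- (eta * Lh (a :: h) i v)) by ring.
      apply Rle_trans with (Pp h i v * (1 - eta * Lh (a :: h) i v + 3 / 4 * (eta * Lh (a :: h) i v) ^ 2)).
      apply Rmult_le_compat_l; lra. right; ring. }
    pose proof (ln_le_sub1 _ HZ). unfold g3 at 1. simpl tl. nra. apply Rinv_0_lt_compat; auto. Qed.

Lemma ln_Pp_le0 h : ln (Pp h k v) <= 0.
Proof. pose proof (ln_le_sub1 _ (Pp_pos h k v)). pose proof (Pp_le1 h k v Hk). lra. Qed.

Lemma ln_K_nonneg : 0 <= ln (INR K).
Proof. destruct (Rle_dec 0 (ln (INR K))); auto. exfalso.
  assert (1 <= INR K) by (apply (le_INR 1); lia).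
  assert (exp (ln (INR K)) < exp 0) by (apply exp_increasing; lra).
  rewrite exp_ln, exp_0 in H0 by lra. lra. Qed.

Lemma exp3_SP h : (length h <= T)%nat -> SP g3 h <= ln (INR K) / eta.
Proof. intros Hl. pose proof (exp3_det h Hl). pose proof (ln_Pp_le0 h).
  apply Rmult_le_reg_l with eta; auto. unfold Rdiv. rewrite <- Rmult_assoc, (Rmult_comm eta (ln _)), Rmult_assoc, Rinv_r by lra. lra. Qed.

Lemma Ex_SP n h f : Ex n h (SP f) = SP f h + sumR n (fun j => Ex (S j) h f).
Proof. induction n. simpl; lra.
  rewrite Ex_last.
  transitivity (Ex n h (fun h1 => sprof K N [] (Pp h1) (fun a => f (a :: h1))) + Ex n h (SP f)).
  rewrite <- Ex_plus. apply Ex_ext; intros e _. simpl SP. rewrite sprof_plus, sprof_const by apply Pp_sum. auto.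
  rewrite IHn, <- Ex_last. change (sumR (S n) ?F) with (sumR n F + F n). lra. Qed.


Lemma Lh_form h i w : (d < length h)%nat ->
  Lh h i w = ell (length h - d)%nat i / qd adj N d (Pp (skipn d (tl h))) i w * Bd adj N d (nth d h []) i w.
Proof. intros H. destruct h as [|a h]; simpl in H; [lia|]. cbn [Lh tl].
  rewrite (proj2 (Nat.ltb_lt _ _)) by (simpl; lia). reflexivity. Qed.

Lemma decomp_P e a hp : length e = d -> Pp (tl (e ++ a :: hp)) = Pd hp.
Proof. intros He. destruct e as [|b e].
  - simpl. rewrite <- (Pp_indep adj N K d eta ell [] hp He). auto.
  - simpl. replace (e ++ a :: hp) with ((e ++ [a]) ++ hp) by (rewrite <- app_assoc; auto).
    apply Pp_indep. rewrite length_app; simpl in *; lia. Qed.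

Lemma skipn_tl_decomp (e : list (list nat)) a hp : length e = d -> skipn d (tl (e ++ a :: hp)) = hp.
Proof. intros He. destruct e as [|b e].
  - simpl in *. rewrite <- He. auto.
  - simpl. rewrite skipn_app. simpl in He. rewrite skipn_all2 by lia.
    replace (d - length e)%nat with 1%nat by lia. auto. Qed.

Lemma decomp_L e a hp i : length e = d ->
  Lh (e ++ a :: hp) i v = ell (S (length hp)) i / qd adj N d (Pp hp) i v * Bd adj N d a i v.
Proof. intros He. rewrite Lh_form by (rewrite length_app; simpl; lia).
  rewrite skipn_tl_decomp by auto. rewrite app_nth2 by lia. rewrite He, Nat.sub_diag. simpl nth.
  rewrite length_app. simpl length. f_equal. f_equal. f_equal. lia. Qed.

Lemma Ex_shift j (F : list (list nat) -> R) (Psi : (nat -> nat -> R) -> (nat -> R) -> R) :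
  (forall h, F h = Psi (Pp (tl h)) (fun i => Lh h i v)) ->
  Ex (S j + d) [] F =
  Ex j [] (fun hp => sprof K N [] (Pp hp) (fun a => Psi (Pd hp) (fun i => ell (S j) i / qd adj N d (Pp hp) i v * Bd adj N d a i v))).
Proof. intros HF. rewrite Ex_split, Ex_last. apply Ex_ext; intros e He. rewrite app_nil_r.
  apply sprof_ext; intros a. apply Ex_prefix. intros e2 He2. rewrite HF, decomp_P by auto.
  f_equal. apply functional_extensionality; intros i. rewrite decomp_L by auto. rewrite He. auto. Qed.

Lemma Ex_Pd j (G : (nat -> nat -> R) -> R) :
  Ex (j + d) [] (fun h => G (Pp h)) = Ex j [] (fun hp => G (Pd hp)).
Proof. rewrite Ex_split. apply Ex_ext; intros e He. apply Ex_prefix; intros e2 He2. rewrite Pp_indep; auto. Qed.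

Definition F1 (h : list (list nat)) := sumR K (fun i => Pp (tl h) i v * Lh h i v).
Definition F3 (h : list (list nat)) := sumR K (fun i => Pp (tl h) i v * (Lh h i v) ^ 2).

Lemma E1 j : Ex (S j + d) [] F1 = Ex (j + d) [] (fun h => sumR K (fun i => Pp h i v * ell (S j) i)).
Proof. rewrite (Ex_shift j F1 (fun p L => sumR K (fun i => p i v * L i))) by reflexivity.
  rewrite (Ex_Pd j (fun p => sumR K (fun i => p i v * ell (S j) i))).
  apply Ex_ext; intros e He. rewrite sprof_sum. apply sumR_ext; intros i Hi.
  transitivity (sprof K N [] (Pp (e ++ [])) (fun a => (Pd (e ++ []) i v * (ell (S j) i / qd adj N d (Pp (e ++ [])) i v)) * Bd adj N d a i v)).
  apply sprof_ext; intros; ring.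
  rewrite sprof_scal, sprof_Bd by auto. pose proof (qd_Pp_pos (e ++ []) i v Hi Hv). field. lra. Qed.

Lemma E2 j : Ex (S j + d) [] (fun h => Lh h k v) = ell (S j) k.
Proof. rewrite (Ex_shift j _ (fun p L => L k)) by reflexivity.
  apply Ex_prefix; intros e He.
  transitivity (sprof K N [] (Pp (e ++ [])) (fun a => (ell (S j) k / qd adj N d (Pp (e ++ [])) k v) * Bd adj N d a k v)).
  apply sprof_ext; intros; ring.
  rewrite sprof_scal, sprof_Bd by auto. pose proof (qd_Pp_pos (e ++ []) k v Hk Hv). field. lra. Qed.

Lemma E3 j : (S j + d <= T)%nat ->
  Ex (S j + d) [] F3 <= exp 1 * Ex j [] (fun h => sumR K (fun i => Pp h i v / qd adj N d (Pp h) i v)).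
Proof. intros Hj. rewrite (Ex_shift j F3 (fun p L => sumR K (fun i => p i v * (L i) ^ 2))) by reflexivity.
  rewrite <- Ex_scal. apply Ex_le; intros e He. rewrite app_nil_r. rewrite sprof_sum, <- sumR_scal.
  apply sumR_le; intros i Hi.
  set (q := qd adj N d (Pp e) i v). set (l := ell (S j) i).
  pose proof (qd_Pp_pos e i v Hi Hv) as Hq. fold q in Hq.
  transitivity (sprof K N [] (Pp e) (fun a => (Pd e i v * (l / q) ^ 2) * Bd adj N d a i v)).
  right. apply sprof_ext; intros a. destruct (Bd_01 adj N d a i v) as [-> | ->]; ring.
  rewrite sprof_scal, sprof_Bd by auto. fold q.
  pose proof (Hell (S j) i ltac:(lia) Hi). fold l in H.
  pose proof (Pd_le e i v ltac:(lia) Hi Hv). pose proof (Pp_pos e i v).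
  assert (0 <= Pd e i v) by (apply Pp_nn).
  replace (Pd e i v * (l / q) ^ 2 * q) with (Pd e i v * l ^ 2 / q) by (field; lra).
  unfold Rdiv. rewrite <- Rmult_assoc. apply Rmult_le_compat_r. left; apply Rinv_0_lt_compat; auto.
  assert (l ^ 2 <= 1) by nra. nra. Qed.


Lemma Lh_short h i w : (length h <= d)%nat -> Lh h i w = 0.
Proof. intros H. destruct h as [|a h]; auto. cbn [Lh]. rewrite (proj2 (Nat.ltb_ge _ _)) by auto. auto. Qed.

Lemma drift1 t (cf : nat -> R) : (S t <= T)%nat -> (forall i, (i < K)%nat -> 0 <= cf i <= 1) ->
  Ex t [] (fun h => sumR K (fun i => Pp h i v * cf i)) <=
  Ex (S t) [] (fun h => sumR K (fun i => Pp h i v * cf i)) + eta * Ex (S t) [] F1.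
Proof. intros Ht Hc. rewrite (Ex_last t [] (fun h => sumR K (fun i => Pp h i v * cf i))), (Ex_last t [] F1).
  rewrite <- Ex_scal, <- Ex_plus. apply Ex_le; intros e He. rewrite app_nil_r.
  rewrite <- sprof_scal, <- sprof_plus.
  rewrite <- (sprof_const K (Pp e) (Pp_sum e) N [] (sumR K (fun i => Pp e i v * cf i))) at 1.
  apply sprof_le. apply Pp_nn. intros a. unfold F1. simpl tl.
  rewrite <- sumR_scal, <- sumR_plus. apply sumR_le; intros i Hi.
  pose proof (Pp_cons_lower a e i v ltac:(lia) Hi Hv). pose proof (Hc i Hi).
  pose proof (Lh_nonneg (a :: e) i v ltac:(simpl; lia) Hi Hv). pose proof (Pp_pos e i v).
  assert (0 <= Pp e i v * Lh (a :: e) i v) by nra.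
  set (P := Pp e i v) in *. set (L := Lh (a :: e) i v) in *. set (Q := Pp (a :: e) i v) in *.
  assert (P * (1 - eta * L) * cf i <= Q * cf i) by (apply Rmult_le_compat_r; lra).
  assert (eta * (P * L) * cf i <= eta * (P * L) * 1) by (apply Rmult_le_compat_l; [apply Rmult_le_pos|]; lra).
  replace (P * (1 - eta * L) * cf i) with (P * cf i - eta * (P * L) * cf i) in H3 by ring. lra. Qed.

Lemma drift j m (cf : nat -> R) : (j + m <= T)%nat -> (forall i, (i < K)%nat -> 0 <= cf i <= 1) ->
  Ex j [] (fun h => sumR K (fun i => Pp h i v * cf i)) <=
  Ex (j + m) [] (fun h => sumR K (fun i => Pp h i v * cf i)) + eta * sumR m (fun r => Ex (S (j + r)) [] F1).
Proof. intros Hjm Hc. induction m.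
  - rewrite Nat.add_0_r. simpl. lra.
  - pose proof (IHm ltac:(lia)). pose proof (drift1 (j + m) cf ltac:(lia) Hc).
    replace (j + S m)%nat with (S (j + m)) by lia. change (sumR (S m) ?F) with (sumR m F + F m). rewrite Rmult_plus_distr_l. lra. Qed.

Lemma sum_Pp_ell_le1 h j : (S j <= T)%nat -> sumR K (fun i => Pp h i v * ell (S j) i) <= 1.
Proof. intros. rewrite <- (Pp_sum h v). apply sumR_le; intros i Hi. pose proof (Hell (S j) i ltac:(lia) Hi).
  pose proof (Pp_pos h i v). nra. Qed.

Lemma Ex_Pp_ell_le1 n j : (S j <= T)%nat -> Ex n [] (fun h => sumR K (fun i => Pp h i v * ell (S j) i)) <= 1.
Proof. intros. rewrite <- (Ex_const n [] 1). apply Ex_le; intros. apply sum_Pp_ell_le1; auto. Qed.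

Lemma F1_le1 t : (t <= T)%nat -> Ex t [] F1 <= 1.
Proof. intros Ht. destruct (Nat.le_gt_cases t d).
  - rewrite (Ex_prefix t [] F1 0). lra. intros e He. unfold F1. rewrite app_nil_r.
    transitivity (sumR K (fun _ => 0)). apply sumR_ext; intros. rewrite Lh_short by lia. ring. rewrite sumR_const; ring.
  - destruct t as [|j0]; [lia|]. replace (S j0) with (S (j0 - d) + d)%nat by lia. rewrite E1.
    apply Ex_Pp_ell_le1. lia. Qed.

Lemma g3_decomp n h : Ex n h g3 = Ex n h F1 + (-1) * Ex n h (fun h => Lh h k v) + (- (eta * (3 / 4))) * Ex n h F3.
Proof. rewrite <- !Ex_scal, <- !Ex_plus. apply Ex_ext; intros. unfold g3, F1, F3. ring. Qed.

Lemma g3_short h : (length h <= d)%nat -> g3 h = 0.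
Proof. intros H. unfold g3. rewrite Lh_short by auto.
  rewrite (sumR_ext K _ (fun _ => 0)), (sumR_ext K (fun i => Pp (tl h) i v * Lh h i v ^ 2) (fun _ => 0)).
  rewrite sumR_const; ring. intros; rewrite Lh_short by auto; ring. intros; rewrite Lh_short by auto; ring. Qed.

Definition Qv (j : nat) := Ex j [] (fun h => sumR K (fun i => Pp h i v / qd adj N d (Pp h) i v)).

Lemma agent_bound :
  sumR T (fun j => Ex j [] (fun h => sumR K (fun i => Pp h i v * ell (S j) i))) <=
  INR d + ln (INR K) / eta + sumR (T - d) (fun j => ell (S j) k + eta * (3 / 4) * exp 1 * Qv j + eta * INR d).
Proof. pose proof ln_K_nonneg as HlnK. assert (0 <= ln (INR K) / eta) by (unfold Rdiv; apply Rmult_le_pos; [lra|left; apply Rinv_0_lt_compat; lra]).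
  destruct (Nat.le_gt_cases T d).
  - replace (T - d)%nat with O by lia. simpl sumR.
    apply Rle_trans with (sumR T (fun _ => 1)). apply sumR_le; intros j Hj. apply Ex_Pp_ell_le1; lia.
    rewrite sumR_const. pose proof (le_INR T d H0). lra.
  - set (M := (T - d)%nat). replace T with (M + d)%nat at 1 by lia. rewrite sumR_split.
    assert (Hlast : sumR d (fun i => Ex (M + i) [] (fun h => sumR K (fun i0 => Pp h i0 v * ell (S (M + i)) i0))) <= INR d).
    { rewrite <- (Rmult_1_r (INR d)), <- sumR_const. apply sumR_le; intros. apply Ex_Pp_ell_le1; lia. }
    assert (Hexp : sumR M (fun j => Ex (S j + d) [] g3) <= ln (INR K) / eta).
    { pose proof (Ex_SP T [] g3) as H2. simpl SP in H2.
      replace T with (d + M)%nat in H2 at 2 by lia. rewrite sumR_split in H2.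
      rewrite (sumR_ext d _ (fun _ => 0)) in H2. rewrite sumR_const in H2.
      2: { intros t Ht. apply Ex_prefix. intros e He. apply g3_short. rewrite length_app; simpl; lia. }
      rewrite (sumR_ext M (fun i => Ex (S (d + i)) [] g3) (fun j => Ex (S j + d) [] g3)) in H2.
      2: intros; f_equal; lia.
      assert (Ex T [] (SP g3) <= ln (INR K) / eta).
      { rewrite <- (Ex_const T [] (ln (INR K) / eta)). apply Ex_le; intros e He. apply exp3_SP. rewrite length_app; simpl; lia. }
      lra. }
    assert (Hmain : sumR M (fun j => Ex j [] (fun h => sumR K (fun i => Pp h i v * ell (S j) i))) <=
       sumR M (fun j => Ex (S j + d) [] g3) + sumR M (fun j => ell (S j) k + eta * (3 / 4) * exp 1 * Qv j + eta * INR d)).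
    { rewrite <- sumR_plus. apply sumR_le; intros j Hj.
      pose proof (drift j d (fun i => ell (S j) i) ltac:(lia) ltac:(intros; apply Hell; lia)) as Hd.
      assert (sumR d (fun r => Ex (S (j + r)) [] F1) <= INR d).
      { rewrite <- (Rmult_1_r (INR d)), <- sumR_const. apply sumR_le; intros. apply F1_le1; lia. }
      rewrite <- E1 in Hd. rewrite g3_decomp, E2.
      pose proof (E3 j ltac:(lia)) as H3. fold (Qv j) in H3.
      assert (eta * sumR d (fun r => Ex (S (j + r)) [] F1) <= eta * INR d) by (apply Rmult_le_compat_l; lra).
      assert (eta * (3 / 4) * Ex (S j + d) [] F3 <= eta * (3 / 4) * exp 1 * Qv j).
      { replace (eta * (3 / 4) * exp 1 * Qv j) with ((eta * (3 / 4)) * (exp 1 * Qv j)) by ring.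
        apply Rmult_le_compat_l; [lra|auto]. }
      lra. }
    lra. Qed.

End Agent.

Hypothesis Hadj_lt : forall u w, adj u w = true -> (u < N)%nat /\ (w < N)%nat.
Hypothesis Hadj_sym : forall u w, adj u w = adj w u.
Variable alpha : nat.
Hypothesis Halpha : forall S, indep_Gd adj N d S -> (length S <= alpha)%nat.

Lemma indep_sum (p : nat -> R) : (forall u, (u < N)%nat -> 0 < p u) ->
  sumR N (fun w => p w / sumR N (fun u => if inball adj N d w u then p u else 0)) <= INR alpha.
Proof. intros Hp.
  destruct (greedy (inball adj N d) (fun w => inball_refl adj N d w) (inball_sym adj N Hadj_lt Hadj_sym d) p N (seq 0 N))
    as [I [HnI [HinI [HindI Hf]]]].
  rewrite length_seq; auto. apply seq_NoDup. intros x Hx. apply in_seq in Hx. apply Hp; lia.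
  unfold fS, PS in Hf. rewrite lsum_seq in Hf.
  rewrite (sumR_ext N _ (fun w => p w / lsum (seq 0 N) (fun u => if inball adj N d w u then p u else 0))).
  2: intros; rewrite lsum_seq; auto.
  eapply Rle_trans. apply Hf. apply le_INR. apply Halpha. split; auto. split.
  intros u Hu. apply HinI, in_seq in Hu. lia. intros; apply HindI; auto. Qed.

Lemma q_lower (p : nat -> R) w : (w < N)%nat -> (forall u, 0 <= p u <= 1) -> 0 < p w ->
  let P := sumR N (fun u => if inball adj N d w u then p u else 0) in
  P / (1 + P) <= 1 - prodR N (fun u => if inball adj N d w u then 1 - p u else 1).
Proof. intros Hw Hp Hpw P.
  assert (HP : 0 <= P) by (apply sumR_nonneg; intros u _; destruct inball; [apply Hp|lra]).
  assert (Hprod : prodR N (fun u => if inball adj N d w u then 1 - p u else 1) <= exp (- P)).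
  { unfold P. replace (- sumR N (fun u => if inball adj N d w u then p u else 0))
      with (sumR N (fun u => -1 * (if inball adj N d w u then p u else 0))) by (rewrite sumR_scal; ring).
    rewrite <- prodR_exp.
    apply prodR_le; intros u _. destruct (inball adj N d w u); pose proof (Hp u).
    split. lra. pose proof (exp_neg_ge (p u)). replace (-1 * p u) with (- p u) by ring. lra.
    replace (-1 * 0) with 0 by ring. rewrite exp_0; lra. }
  assert (exp (- P) <= / (1 + P)).
  { rewrite exp_Ropp. apply Rinv_le_contravar. lra. apply exp_ineq1_le. }
  replace (P / (1 + P)) with (1 - / (1 + P)) by (field; lra). lra. Qed.

Lemma graph_bound h i : (i < K)%nat ->
  sumR N (fun w => Pp h i w / qd adj N d (Pp h) i w) <= INR alpha + sumR N (fun w => Pp h i w).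
Proof. intros Hi. pose (p := fun u => Pp h i u).
  pose proof (indep_sum p (fun u _ => Pp_pos h i u)) as HI.
  apply Rle_trans with (sumR N (fun w => p w + p w / sumR N (fun u => if inball adj N d w u then p u else 0))).
  2: rewrite sumR_plus; unfold p in *; cbv beta in *; lra.
  apply sumR_le; intros w Hw.
  assert (Hp : forall u, 0 <= p u <= 1) by (intros; unfold p; split; [apply Pp_nn|apply Pp_le1; auto]).
  pose proof (q_lower p w Hw Hp (Pp_pos h i w)) as Hq. simpl in Hq.
  assert (HPw : p w <= sumR N (fun u => if inball adj N d w u then p u else 0)).
  { apply Rle_trans with ((fun u => if inball adj N d w u then p u else 0) w).
    cbv beta. rewrite inball_refl. lra. apply (sumR_le_one_term N (fun u => if inball adj N d w u then p u else 0) w); auto. intros u _. destruct inball; [apply Hp|lra]. }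
  set (P := sumR N (fun u => if inball adj N d w u then p u else 0)) in *.
  pose proof (Pp_pos h i w) as Hpos. fold (p w) in Hpos.
  assert (Hqd : qd adj N d (Pp h) i w = 1 - prodR N (fun u => if inball adj N d w u then 1 - p u else 1)) by reflexivity.
  rewrite Hqd. assert (0 < P / (1 + P)) by (apply Rdiv_lt_0_compat; lra).
  apply Rle_trans with (p w / (P / (1 + P))).
  - unfold Rdiv. apply Rmult_le_compat_l. lra. apply Rinv_le_contravar; auto.
  - right. field. lra. Qed.

Lemma avg_decomp n h : exp_avg_loss adj N K d eta ell n h =
  sumR n (fun j => Ex j h (fun h' => / INR N * sumR N (fun w => sumR K (fun i => Pp h' i w * ell (S (length h')) i)))).
Proof. revert h; induction n; intros h. reflexivity.
  rewrite sumR_shift. cbn [exp_avg_loss Ex]. change (hd (fun _ _ => 0) (pseq adj N K d eta ell h)) with (Pp h).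
  rewrite sprof_plus. f_equal.
  - rewrite sprof_scal, sprof_sum. f_equal. apply sumR_ext; intros w Hw. simpl length.
    apply sprof_coord0; auto.
  - rewrite (sprof_ext K N [] (Pp h) _ _ (fun a => IHn (a :: h))), sprof_sum. reflexivity. Qed.


Lemma sumQ_bound j : sumR N (fun w => Qv w j) <= INR K * INR alpha + INR N.
Proof. unfold Qv. rewrite <- Ex_sum. rewrite <- (Ex_const j [] (INR K * INR alpha + INR N)).
  apply Ex_le; intros e _. rewrite sumR_swap.
  apply Rle_trans with (sumR K (fun i => INR alpha + sumR N (fun w => Pp (e ++ []) i w))).
  apply sumR_le; intros; apply graph_bound; auto.
  rewrite sumR_plus, sumR_const, sumR_swap.
  rewrite (sumR_ext N _ (fun _ => 1)) by (intros; apply Pp_sum). rewrite sumR_const. lra. Qed.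

Lemma regret_k k : (k < K)%nat -> (1 <= N)%nat ->
  exp_avg_loss adj N K d eta ell T [] - sumR T (fun s => ell (S s) k) <=
  INR d + ln (INR K) / eta + INR (T - d) * (eta * INR d + eta * (3 / 4) * exp 1 * (INR K * INR alpha + INR N) / INR N).
Proof. intros Hk HN. assert (HNp : 0 < INR N) by (apply lt_0_INR; lia).
  rewrite avg_decomp.
  transitivity (/ INR N * sumR N (fun w => sumR T (fun j => Ex j [] (fun h => sumR K (fun i => Pp h i w * ell (S j) i))))
     - sumR T (fun s => ell (S s) k)).
  { right. f_equal. rewrite <- sumR_swap, <- sumR_scal. apply sumR_ext; intros j _.
    rewrite <- Ex_sum, <- Ex_scal. apply Ex_ext; intros e He. rewrite length_app, He. simpl. rewrite Nat.add_0_r. auto. }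
  set (M := (T - d)%nat).
  set (c0 := eta * (3 / 4) * exp 1).
  assert (HB : sumR N (fun w => sumR T (fun j => Ex j [] (fun h => sumR K (fun i => Pp h i w * ell (S j) i)))) <=
    sumR N (fun w => (INR d + ln (INR K) / eta) + sumR M (fun j => ell (S j) k + c0 * Qv w j + eta * INR d))).
  { apply sumR_le; intros w Hw. pose proof (agent_bound w k Hw Hk). unfold c0, M. lra. }
  rewrite sum_alg in HB.
  assert (HQ : sumR M (fun j => sumR N (fun w => Qv w j)) <= INR M * (INR K * INR alpha + INR N)).
  { rewrite <- sumR_const. apply sumR_le; intros; apply sumQ_bound. }
  assert (Hc0 : 0 <= c0) by (unfold c0; pose proof (exp_pos 1); nra).
  assert (HellM : sumR M (fun j => ell (S j) k) <= sumR T (fun s => ell (S s) k)).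
  { destruct (Nat.le_gt_cases T d).
    - unfold M. replace (T - d)%nat with O by lia. simpl. apply sumR_nonneg; intros; apply Hell; lia.
    - replace (sumR T (fun s => ell (S s) k)) with (sumR (M + d) (fun s => ell (S s) k)) by (f_equal; unfold M; lia). rewrite sumR_split.
      assert (0 <= sumR d (fun i => ell (S (M + i)) k)) by (apply sumR_nonneg; intros; apply Hell; unfold M; lia). lra. }
  rewrite sumR_plus, sumR_const in HB.
  apply Rmult_le_compat_l with (r := / INR N) in HB. 2: left; apply Rinv_0_lt_compat; auto.
  assert (c0 * sumR M (fun j => sumR N (fun w => Qv w j)) <= c0 * (INR M * (INR K * INR alpha + INR N))) by (apply Rmult_le_compat_l; auto).
  replace (/ INR N * (INR N * (INR d + ln (INR K) / eta) + INR N * (sumR M (fun j => ell (S j) k) + INR M * (eta * INR d)) +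
     c0 * sumR M (fun j => sumR N (fun w => Qv w j))))
   with ((INR d + ln (INR K) / eta) + (sumR M (fun j => ell (S j) k) + INR M * (eta * INR d)) +
     / INR N * (c0 * sumR M (fun j => sumR N (fun w => Qv w j)))) in HB by (field; lra).
  assert (/ INR N * (c0 * sumR M (fun j => sumR N (fun w => Qv w j))) <= / INR N * (c0 * (INR M * (INR K * INR alpha + INR N)))).
  { apply Rmult_le_compat_l; auto. left; apply Rinv_0_lt_compat; auto. }
  replace (INR M * (eta * INR d + eta * (3 / 4) * exp 1 * (INR K * INR alpha + INR N) / INR N))
    with (INR M * (eta * INR d) + / INR N * (c0 * (INR M * (INR K * INR alpha + INR N)))) by (unfold c0; field; lra).
  lra. Qed.

End Props.

Lemma minR_attained n f : exists k, (k <= n)%nat /\ minR n f = f k.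
Proof. induction n. exists O; split; auto. destruct IHn as [k [Hk E]]. simpl minR. rewrite E.
  unfold Rmin. destruct (Rle_dec (f k) (f (S n))). exists k; split; auto. exists (S n); split; auto. Qed.

Theorem theorem1 (adj : nat -> nat -> bool) (N K d : nat) (gamma : R)
  (alpha : nat) (T : nat) (ell : nat -> nat -> R) :
  connected_graph adj N ->
  (2 <= K)%nat ->
  0 < gamma <= 1 ->
  indep_number adj N d alpha ->
  (1 <= T)%nat ->
  (forall t i, (1 <= t <= T)%nat -> (i < K)%nat -> 0 <= ell t i <= 1) ->
  regret_coop adj N K d (gamma / (INR K * exp 1 * (INR d + 1))) ell T
  <= 2 * INR d + INR K * exp 1 * (INR d + 1) * ln (INR K) / gamma
     + gamma * (INR alpha / (2 * (1 - exp (-1)) * (INR d + 1) * INR N)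
                + 3 / (INR K * exp 1)) * INR T.
Proof.
  intros [HN [Hlt [Hsym _]]] HK Hg [_ Halpha] HT Hell.
  set (E := exp 1).
  assert (HE2 : 2 < E) by (unfold E; pose proof (exp_ineq1 1 ltac:(lra)); lra).
  assert (HE3 : E <= 3) by apply exp_le_3.
  assert (HKr : 2 <= INR K) by (apply (le_INR 2); lia).
  assert (HDr : 1 <= INR d + 1) by (pose proof (pos_INR d); lra).
  assert (HNr : 1 <= INR N) by (apply (le_INR 1); lia).
  assert (HAr : 0 <= INR alpha) by apply pos_INR.
  assert (Hdr : 0 <= INR d) by apply pos_INR.
  set (eta := gamma / (INR K * E * (INR d + 1))).
  assert (Heta_pos : 0 < eta) by (unfold eta; apply Rdiv_lt_0_compat; [lra|]; apply Rmult_lt_0_compat; [apply Rmult_lt_0_compat|]; lra).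
  assert (Heta_small : eta * INR K * exp 1 * (INR d + 1) <= 1).
  { fold E. unfold eta. replace (gamma / (INR K * E * (INR d + 1)) * INR K * E * (INR d + 1)) with gamma by (field; repeat split; lra). lra. }
  destruct (minR_attained (K - 1) (fun i => sumR T (fun s => ell (S s) i))) as [k [Hk Emin]].
  unfold regret_coop. fold E. fold eta. rewrite Emin.
  pose proof (regret_k adj N K d eta ell T ltac:(lia) ltac:(lra) Heta_small Hell Heta_pos Hlt Hsym alpha Halpha k ltac:(lia) HN) as Hr.
  fold E in Hr.
  set (X := eta * INR d + eta * (3 / 4) * E * (INR K * INR alpha + INR N) / INR N) in Hr.
  assert (HX : 0 <= X).
  { unfold X. apply Rplus_le_le_0_compat. apply Rmult_le_pos; lra.
    unfold Rdiv. apply Rmult_le_pos; [|left; apply Rinv_0_lt_compat; lra].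
    apply Rmult_le_pos. apply Rmult_le_pos; lra. pose proof (pos_INR K). nra. }
  assert (HTd : INR (T - d) <= INR T) by (apply le_INR; lia).
  assert (HlnK : ln (INR K) / eta = INR K * E * (INR d + 1) * ln (INR K) / gamma).
  { unfold eta. field. repeat split; lra. }
  set (Y := INR alpha / (2 * (1 - exp (-1)) * (INR d + 1) * INR N) + 3 / (INR K * E)).
  assert (HXY : X <= gamma * Y).
  { unfold X, Y, eta.
    assert (Hinv : exp (-1) = / E) by (unfold E; rewrite <- exp_Ropp; f_equal; lra).
    rewrite Hinv.
    assert (H1 : 0 < 2 * (1 - / E) <= 4 / 3).
    { assert (/ 3 <= / E) by (apply Rinv_le_contravar; lra). assert (/ E < / 2) by (apply Rinv_lt_contravar; lra). lra. }
    assert (Ha : gamma / (INR K * E * (INR d + 1)) * (3 / 4) * E * (INR K * INR alpha) / INR N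
              <= gamma * (INR alpha / (2 * (1 - / E) * (INR d + 1) * INR N))).
    { replace (gamma / (INR K * E * (INR d + 1)) * (3 / 4) * E * (INR K * INR alpha) / INR N)
        with ((3 / 4) * (gamma * INR alpha / ((INR d + 1) * INR N))) by (field; repeat split; lra).
      replace (gamma * (INR alpha / (2 * (1 - / E) * (INR d + 1) * INR N)))
        with (/ (2 * (1 - / E)) * (gamma * INR alpha / ((INR d + 1) * INR N))) by (field; repeat split; lra).
      apply Rmult_le_compat_r. unfold Rdiv. apply Rmult_le_pos. nra. left; apply Rinv_0_lt_compat; nra.
      apply Rmult_le_reg_r with (2 * (1 - / E)). lra. rewrite Rinv_l by lra. lra. }
    assert (Hb : gamma / (INR K * E * (INR d + 1)) * INR d + gamma / (INR K * E * (INR d + 1)) * (3 / 4) * E * INR N / INR N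
              <= gamma * (3 / (INR K * E))).
    { replace (gamma / (INR K * E * (INR d + 1)) * INR d + gamma / (INR K * E * (INR d + 1)) * (3 / 4) * E * INR N / INR N)
        with ((gamma / (INR K * E * (INR d + 1))) * (INR d + 3 / 4 * E)) by (field; repeat split; lra).
      replace (gamma * (3 / (INR K * E))) with ((gamma / (INR K * E * (INR d + 1))) * (3 * (INR d + 1))) by (field; repeat split; lra).
      apply Rmult_le_compat_l. left; apply Rdiv_lt_0_compat; [lra|]. apply Rmult_lt_0_compat; [apply Rmult_lt_0_compat|]; lra.
      lra. }
    replace (gamma / (INR K * E * (INR d + 1)) * (3 / 4) * E * (INR K * INR alpha + INR N) / INR N)
      with (gamma / (INR K * E * (INR d + 1)) * (3 / 4) * E * (INR K * INR alpha) / INR N +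
            gamma / (INR K * E * (INR d + 1)) * (3 / 4) * E * INR N / INR N) by (field; repeat split; lra).
    lra. }
  assert (INR (T - d) * X <= INR T * (gamma * Y)).
  { apply Rle_trans with (INR T * X). apply Rmult_le_compat_r; auto. apply Rmult_le_compat_l; auto. apply pos_INR. }
  rewrite HlnK in Hr. replace (gamma * Y * INR T) with (INR T * (gamma * Y)) by ring. lra. Qed.
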